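(* Let $G$ be an abelian group and $B=\bigoplus_{g\in G}B_g$ a $G$-graded integral domain of characteristic zero. Let $D\in \mathrm{HLND}(B)\setminus\{0\}$, let $A=\ker D$, and suppose that $G(A)=G(B)$. Then: (a) $\mathrm{HFrac}(B)=(\mathrm{HFrac}(A))^{(1)}$, i.e. $\mathrm{HFrac}(B)$ is a purely transcendental extension of $\mathrm{HFrac}(A)$ of transcendence degree $1$. (b) If $\mathbf{k}$ is a field included in $B$, then $\mathbf{k}\cap B_0$ is a field included in $\mathrm{HFrac}(A)$. (c) If $G$ is torsion-free and $\mathbf{k}$ is a field included in $B$, then $\mathbf{k}\subseteq \mathrm{HFrac}(A)$ and consequently $\mathrm{HFrac}(B)$ is ruled over $\mathbf{k}$.
   Context: A $G$-grading of a ring $B$ is a family of additive subgroups $\{B_g\}_{g\in G}$ with $B=\bigoplus_g B_g$ and $B_gB_h\subseteq B_{g+h}$. A derivation $D:B\to B$ is locally nilpotent if for each $b\in B$ some power $D^n(b)=0$; it is homogeneous if there is $h\in G$ with $D(B_g)\subseteq B_{g+h}$ for all $g$. $\mathrm{HLND}(B)$ denotes the set of homogeneous locally nilpotent derivations of $B$. For $D\in\mathrm{HLND}(B)$, $A=\ker D$ is a graded subring, i.e. $A=\bigoplus_g (A\cap B_g)$; write $A_g=A\cap B_g$. For a graded subring $A$ of $B$, $G(A)$ is the subgroup of $G$ generated by $\{g\in G: A_g\neq 0\}$. For a $G$-graded domain $B$, $\mathrm{HFrac}(B)$ (the homogeneous field of fractions) is the subfield of $\mathrm{Frac}(B)$ consisting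 of all fractions $b/s$ with $b\in B_i$, $s\in B_i\setminus\{0\}$ for some $i\in G$; for the graded subring $A$, $\mathrm{HFrac}(A)\subseteq\mathrm{HFrac}(B)$ is defined analogously. A field extension $L/\mathbf{k}$ is ruled if there is a field $K$ with $\mathbf{k}\subseteq K\subseteq L$ and $L=K^{(1)}$ (purely transcendental of transcendence degree $1$ over $K$). *)

(* Defs.v *)
From HB Require Import structures.
From mathcomp Require Import all_boot all_order all_algebra.
Set Implicit Arguments. Unset Strict Implicit. Unset Printing Implicit Defensive.
Import Order.TTheory GRing.Theory Num.Theory.
Local Open Scope ring_scope.

Definition is_grading (G : zmodType) (B : pzRingType) (Bg : G -> B -> Prop) : Prop :=
  [/\ (forall g, Bg g 0 /\ forall x y, Bg g x -> Bg g y -> Bg g (x - y)),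
      (forall g h x y, Bg g x -> Bg h y -> Bg (g + h) (x * y)),
      (forall b : B, exists (s : seq G) (f : G -> B),
          [/\ uniq s, forall g, Bg g (f g) & b = \sum_(g <- s) f g]) &
      (forall (s : seq G) (f : G -> B), uniq s -> (forall g, Bg g (f g)) ->
          \sum_(g <- s) f g = 0 -> forall g, g \in s -> f g = 0)].

Definition is_derivation (B : pzRingType) (D : B -> B) : Prop :=
  (forall x y, D (x + y) = D x + D y) /\ (forall x y, D (x * y) = D x * y + x * D y).

Definition locally_nilpotent (B : pzRingType) (D : B -> B) : Prop :=
  forall b, exists n, iter n D b = 0.

Definition homogeneous_map (G : zmodType) (B : pzRingType) (Bg : G -> B -> Prop)
    (D : B -> B) : Prop :=
  exists h : G, forall g b, Bg g b -> Bg (g + h) (D b).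

Definition is_HLND (G : zmodType) (B : pzRingType) (Bg : G -> B -> Prop)
    (D : B -> B) : Prop :=
  [/\ is_derivation D, locally_nilpotent D & homogeneous_map Bg D].

Definition gen_subgroup (G : zmodType) (S : G -> Prop) : G -> Prop :=
  fun g => forall H : G -> Prop,
    H 0 -> (forall x y, H x -> H y -> H (x - y)) -> (forall x, S x -> H x) -> H g.

(* G(A) for a graded subring A (given as a predicate on B), with A_g = A \cap B_g *)
Definition degree_group (G : zmodType) (B : pzRingType) (Bg : G -> B -> Prop)
    (A : B -> Prop) : G -> Prop :=
  gen_subgroup (fun g => exists b, [/\ A b, Bg g b & b <> 0]).

Definition HFrac (G : zmodType) (B : idomainType) (Bg : G -> B -> Prop)
    (A : B -> Prop) : {fraction B} -> Prop :=
  fun x => exists (i : G) (b s : B),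
    [/\ A b /\ A s, Bg i b, Bg i s, s <> 0 & x = (FracField.tofrac b) / (FracField.tofrac s)].

Definition is_subfield (R : pzRingType) (K : R -> Prop) : Prop :=
  [/\ K 1, (forall x y, K x -> K y -> K (x - y)),
      (forall x y, K x -> K y -> K (x * y)) &
      (forall x, K x -> x <> 0 -> exists2 y, K y & x * y = 1)].

Definition pure_trdeg1 (F : fieldType) (K L : F -> Prop) : Prop :=
  [/\ is_subfield K, is_subfield L, (forall x, K x -> L x) &
      exists t, [/\ L t,
        (forall p : {poly F}, (forall i, K p`_i) -> p != 0 -> p.[t] != 0) &
        (forall x, L x <-> exists p q : {poly F},
            [/\ forall i, K p`_i, forall i, K q`_i, q.[t] != 0 & x = p.[t] / q.[t]])]].

Definition ruled (F : fieldType) (k L : F -> Prop) : Prop :=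
  exists K : F -> Prop, [/\ forall x, k x -> K x, forall x, K x -> L x & pure_trdeg1 K L].

Definition torsion_free (G : zmodType) : Prop :=
  forall (n : nat) (g : G), (0 < n)%N -> g *+ n = 0 -> g = 0.

(* Main.v *)
Require Import Defs.
From HB Require Import structures.
From mathcomp Require Import all_boot all_order all_algebra.
From Stdlib Require Import Classical.
From mathcomp Require Import ring zify lra.
Import GRing.Theory.
Local Open Scope ring_scope.


Definition comb (G : zmodType) (F : seq G) (c : nat -> int) : G :=
  \sum_(i < size F) F`_i *~ c i.
Arguments comb {G}.
Definition wlin (n : nat) (w : nat -> rat) (c : nat -> int) : rat :=
  \sum_(i < n) (c i)%:~R * w i.
Definition wcons (q : rat) (w : nat -> rat) : nat -> rat :=
  fun i => if i is i'.+1 then w i' else q.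

Lemma combS (G : zmodType) (f : G) F c :
  comb (f :: F) c = f *~ c 0%N + comb F (fun i => c i.+1).
Proof. by rewrite /comb /= big_ord_recl. Qed.
Lemma wlinS n w c :
  wlin n.+1 w c = (c 0%N)%:~R * w 0%N + wlin n (fun i => w i.+1) (fun i => c i.+1).
Proof. by rewrite /wlin big_ord_recl. Qed.
Lemma combD (G : zmodType) (F : seq G) c1 c2 :
  comb F (fun i => c1 i + c2 i) = comb F c1 + comb F c2.
Proof. by rewrite /comb -big_split; apply: eq_bigr => i _; rewrite mulrzDr. Qed.
Lemma combM (G : zmodType) (F : seq G) a c :
  comb F (fun i => a * c i) = comb F c *~ a.
Proof. by rewrite /comb mulrz_suml; apply: eq_bigr => i _; rewrite mulrC mulrzA. Qed.
Lemma combN (G : zmodType) (F : seq G) c :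
  comb F (fun i => - c i) = - comb F c.
Proof. by rewrite /comb -sumrN; apply: eq_bigr => i _; rewrite mulrNz. Qed.
Lemma wlinD n w c1 c2 : wlin n w (fun i => c1 i + c2 i) = wlin n w c1 + wlin n w c2.
Proof. by rewrite /wlin -big_split; apply: eq_bigr => i _; rewrite intrD mulrDl. Qed.
Lemma wlinM n w a c : wlin n w (fun i => a * c i) = a%:~R * wlin n w c.
Proof. by rewrite /wlin mulr_sumr; apply: eq_bigr => i _; rewrite intrM mulrA. Qed.
Lemma wlinN n w c : wlin n w (fun i => - c i) = - wlin n w c.
Proof. by rewrite /wlin -sumrN; apply: eq_bigr => i _; rewrite intrN mulNr. Qed.

Lemma fresh (s : seq rat) : exists q, forall v, v \in s -> v < q.
Proof.
elim: s => [|v s [q Hq]]; first by exists 0.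
exists (if v < q then q else v + 1) => u; rewrite inE => /orP[/eqP ->|us].
  by case: ifP => // _; lra.
have := Hq u us; case: ifP => // /negbT vq uq; lra.
Qed.

Lemma weights (G : zmodType) (TF : torsion_free G) (F : seq G) :
  forall (N : nat) (Z : nat -> nat -> int) (P : nat -> bool),
  (forall j, (j < N)%N -> P j -> comb F (Z j) != 0) ->
  exists w : nat -> rat,
   (forall c, comb F c = 0 -> wlin (size F) w c = 0) /\
   (forall j, (j < N)%N -> P j -> wlin (size F) w (Z j) != 0).
Proof.
elim: F => [|f F IH] N Z P HZ.
  exists (fun _ => 0); split; first by move=> c _; rewrite /wlin big_ord0.
  by move=> j jN Pj; have := HZ j jN Pj; rewrite /comb big_ord0 eqxx.
case: (classic (exists m d, (0 < m)%N /\ f *+ m = comb F d)) => [[m [d [m0 Ef]]]|HA].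
  pose tr (c : nat -> int) := fun i => c 0%N * d i + m%:Z * c i.+1.
  have Ctr : forall c, comb F (tr c) = comb (f :: F) c *+ m.
    move=> c; rewrite /tr combD !combM combS -Ef !pmulrn mulrzAC.
    by rewrite mulrzDl.
  have HZ' : forall j, (j < N)%N -> P j -> comb F (tr (Z j)) != 0.
    move=> j jN Pj; rewrite Ctr; apply/eqP => E0.
    by have := HZ j jN Pj; rewrite (TF _ _ m0 E0) eqxx.
  have [w' [W1 W2]] := IH N (fun j => tr (Z j)) P HZ'.
  have m0' : (m%:R : rat) != 0 by rewrite Num.Theory.pnatr_eq0 -lt0n.
  pose q := wlin (size F) w' d / m%:R.
  have Wtr : forall c, wlin (size F) w' (tr c) = m%:R * wlin (size (f :: F)) (wcons q w') c.
    move=> c; rewrite /tr wlinD !wlinM /= wlinS /q /=.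
    rewrite -[m%:Z%:~R]/(m%:R : rat); field.
    by rewrite m0'.
  exists (wcons q w'); split.
    move=> c E0; have := W1 (tr c); rewrite Ctr E0 mul0rn => /(_ erefl).
    by rewrite Wtr => /eqP; rewrite mulf_eq0 (negPf m0') => /eqP.
  move=> j jN Pj; have := W2 j jN Pj; rewrite Wtr mulf_eq0 (negPf m0') /=.
  by [].
have c0 : forall c, comb (f :: F) c = 0 -> c 0%N = 0.
  move=> c; rewrite combS; case E: (c 0%N) => [n|n] H.
    case: n E H => // n E H; exfalso; apply: HA; exists n.+1, (fun i => - c i.+1).
    split => //; rewrite combN pmulrn; apply/eqP; rewrite -addr_eq0; exact/eqP.
  exfalso; apply: HA; exists n.+1, (fun i => c i.+1); split => //.
  rewrite pmulrn; move: H; rewrite NegzE mulrNz addrC => /eqP; rewrite subr_eq0 => /eqP E2.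
  by rewrite E2.
pose P' := fun j => P j && (comb F (fun i => Z j i.+1) != 0).
have HZ' : forall j, (j < N)%N -> P' j -> comb F (fun i => Z j i.+1) != 0.
  by move=> j jN /andP[].
have [w' [W1 W2]] := IH N (fun j i => Z j i.+1) P' HZ'.
pose forb := [seq - wlin (size F) w' (fun i => Z j i.+1) / (Z j 0%N)%:~R
               | j <- iota 0 N & P j && (Z j 0%N != 0)].
have [q Hq] := fresh forb.
exists (wcons q w'); split.
  move=> c E0; have cz := c0 c E0; move: E0; rewrite combS cz mulr0z add0r => E1.
  by rewrite /= wlinS /= cz mul0r add0r; apply: W1.
move=> j jN Pj; rewrite /= wlinS /=.
case: (eqVneq (Z j 0%N) 0) => [z0|z0].
  rewrite z0 mul0r add0r; apply: W2 => //; rewrite /P' Pj /=.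
  by have := HZ j jN Pj; rewrite combS z0 mulr0z add0r.
apply/eqP => E0.
have Z0 : ((Z j 0%N)%:~R : rat) != 0 by rewrite intr_eq0.
have qin : q \in forb.
  apply/mapP; exists j; first by rewrite mem_filter Pj z0 mem_iota.
  apply/eqP; rewrite eq_sym -subr_eq0; apply/eqP.
  move: E0; rewrite addrC => /eqP; rewrite addr_eq0 => /eqP ->.
  by rewrite opprK [_ / _]mulrC mulKf // subrr.
by have := Hq q qin; rewrite Order.POrderTheory.ltxx.
Qed.

Definition eb (a : nat) : nat -> int := fun i => (i == a)%:R.

Lemma comb_eb (G : zmodType) (F : seq G) a : (a < size F)%N -> comb F (eb a) = F`_a.
Proof.
move=> aF; rewrite /comb (bigD1 (Ordinal aF)) //= /eb eqxx mulr1z big1 ?addr0 //.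
by move=> i; rewrite -val_eqE /= => /negPf ->; rewrite mulr0z.
Qed.
Lemma wlin_eb n w a : (a < n)%N -> wlin n w (eb a) = w a.
Proof.
move=> an; rewrite /wlin (bigD1 (Ordinal an)) //= /eb eqxx mul1r big1 ?addr0 //.
by move=> i; rewrite -val_eqE /= => /negPf ->; rewrite mul0r.
Qed.

Lemma argmax (T : eqType) (s : seq T) (phi : T -> rat) : s != [::] ->
  exists2 x, x \in s & forall y, y \in s -> phi y <= phi x.
Proof.
elim: s => [|a s IH] // _.
case: (eqVneq s [::]) => [->|s0].
  by exists a; rewrite ?inE ?eqxx // => y; rewrite inE => /eqP ->; lra.
have [x xs Hx] := IH s0.
case: (boolP (phi a <= phi x)) => ax.
  exists x; first by rewrite inE xs orbT.
  by move=> y; rewrite inE => /orP[/eqP ->|/Hx].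
exists a; first by rewrite inE eqxx.
move=> y; rewrite inE => /orP[/eqP -> |/Hx]; lra.
Qed.

Lemma weights_app (G : zmodType) (TF : torsion_free G) (F : seq G) :
  exists w : nat -> rat,
  [/\ forall a b c d, (a < size F)%N -> (b < size F)%N -> (c < size F)%N -> (d < size F)%N ->
        F`_a + F`_b = F`_c + F`_d -> w a + w b = w c + w d,
      forall a b, (a < size F)%N -> (b < size F)%N -> F`_a + F`_b = 0 -> w a + w b = 0 &
      forall a b, (a < size F)%N -> (b < size F)%N -> F`_a != F`_b -> w a != w b].
Proof.
set n := size F.
pose Z := fun j i => eb (j %/ n) i - eb (j %% n) i.
pose P := fun j => F`_(j %/ n) != F`_(j %% n).
have n0 : forall j, (j < n * n)%N -> (0 < n)%N.
  by move=> j; case: (n) => //; rewrite mul0n.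
have HZ : forall j, (j < n * n)%N -> P j -> comb F (Z j) != 0.
  move=> j jn Pj; rewrite /Z combD combN !comb_eb ?subr_eq0 //.
    by rewrite ltn_pmod // (n0 j).
  by rewrite ltn_divLR // (n0 j).
have [w [W1 W2]] := weights _ TF F _ _ _ HZ.
exists w; split.
- move=> a b c d aF bF cF dF E.
  have := W1 (fun i => (eb a i + eb b i) + - (eb c i + eb d i)).
  rewrite combD combN !combD !comb_eb // E subrr => /(_ erefl).
  rewrite wlinD wlinN !wlinD !wlin_eb // => /eqP; rewrite subr_eq0 => /eqP.
  by [].
- move=> a b aF bF E.
  have := W1 (fun i => eb a i + eb b i).
  by rewrite combD !comb_eb // E => /(_ erefl); rewrite wlinD !wlin_eb.
- move=> a b aF bF ab.
  have jn : (a * n + b < n * n)%N by nia.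
  have n0' : (0 < n)%N by case: (n) aF.
  have Ea : ((a * n + b) %/ n = a)%N by rewrite divnMDl // divn_small // addn0.
  have Eb : ((a * n + b) %% n = b)%N by rewrite modnMDl modn_small.
  have := W2 _ jn; rewrite /P Ea Eb => /(_ ab).
  rewrite /Z Ea Eb wlinD wlinN !wlin_eb // subr_eq0.
  by [].
Qed.

Section SF.
Variables (F : fieldType) (K : F -> Prop).
Hypothesis SK : is_subfield K.
Lemma sf1 : K 1. Proof. by case: SK. Qed.
Lemma sfB x y : K x -> K y -> K (x - y). Proof. by case: SK => _ H _ _; apply: H. Qed.
Lemma sfM x y : K x -> K y -> K (x * y). Proof. by case: SK => _ _ H _; apply: H. Qed.
Lemma sf0 : K 0. Proof. by rewrite -(subrr 1); apply: sfB; apply: sf1. Qed.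
Lemma sfN x : K x -> K (- x). Proof. by move=> Kx; rewrite -sub0r; apply: sfB => //; apply: sf0. Qed.
Lemma sfD x y : K x -> K y -> K (x + y).
Proof. by move=> Kx Ky; rewrite -[y]opprK; apply: sfB => //; apply: sfN. Qed.
Lemma sf_sum (I : Type) (r : seq I) (P : pred I) (Fn : I -> F) :
  (forall i, P i -> K (Fn i)) -> K (\sum_(i <- r | P i) Fn i).
Proof. move=> H; apply: (big_ind K) => //; [exact: sf0 | exact: sfD]. Qed.
Lemma sfX x n : K x -> K (x ^+ n).
Proof. by move=> Kx; elim: n => [|n IH]; [rewrite expr0; apply: sf1 | rewrite exprS; apply: sfM]. Qed.
Lemma sfV x : K x -> K (x^-1).
Proof.
move=> Kx; case: (eqVneq x 0) => [->|x0]; first by rewrite invr0; apply: sf0.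
case: SK => _ _ _ /(_ x Kx (elimN eqP x0)) [y Ky Hy].
by rewrite -[x^-1]mulr1 -Hy mulKf.
Qed.
Lemma sf_poly (p : {poly F}) t : (forall i, K p`_i) -> K t -> K p.[t].
Proof.
move=> Hp Kt; rewrite horner_coef; apply: sf_sum => i _; apply: sfM => //; exact: sfX.
Qed.
End SF.

Lemma fid1a (F : fieldType) (C U2 Cc U1 x y z : F) : x != 0 -> y != 0 -> Cc != 0 -> U1 != 0 ->
  (C * U2 * x) / (Cc * U1 * y) * (z * y / x) = C * z * U2 / (Cc * U1).
Proof. by move=> b1 b2 b3 b4; field; rewrite b1 b2 b3 b4. Qed.
Lemma fid1 (F : fieldType) (C U2 A1 Cc U1 A2 R : F) k : A1 != 0 -> A2 != 0 -> Cc != 0 -> U1 != 0 ->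
  (C * U2 * A1 ^+ k) / (Cc * U1 * A2 ^+ k) * (R * A2 / A1) ^+ k = C * R ^+ k * U2 / (Cc * U1).
Proof.
move=> a1 a2 c u; rewrite expr_div_n exprMn fid1a // expf_neq0 //.
Qed.
Lemma fid2 (F : fieldType) (C Y U2 U1 : F) : C != 0 -> U1 != 0 ->
  C * Y * U2 / (C * U1) = Y * U2 / U1.
Proof. by move=> b1 b2; field; rewrite b1 b2. Qed.
Lemma fid3 (F : fieldType) (B S U2 U1 : F) : S != 0 -> U2 != 0 -> U1 != 0 ->
  B / S = (B * U2 / U1) / (S * U2 / U1).
Proof. by move=> b1 b2 b3; field; rewrite b1 b2 b3. Qed.
Lemma fid4 (F : fieldType) (A R : F) n k : (k <= n)%N -> A != 0 ->
  A ^+ n * (R / A) ^+ k = A ^+ (n - k) * R ^+ k.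
Proof.
move=> kn a; rewrite expr_div_n -{1}(subnK kn) exprD -mulrA; congr (_ * _).
by rewrite mulrCA mulfV ?mulr1 // expf_neq0.
Qed.
Lemma zL2 (G : zmodType) (e g d j2 i2 : G) k :
  e + g - d *+ k + j2 + (d + i2) *+ k = e + (g + j2) + i2 *+ k.
Proof. rewrite mulrnDl addrA -[e + g - d *+ k + j2 + d *+ k]addrA [j2 + _]addrC addrA addrNK. by rewrite addrA. Qed.
Section Grad.
Variables (G : zmodType) (B : idomainType) (Bg : G -> B -> Prop).
Hypothesis HG : is_grading Bg.

Lemma Bg0 g : Bg g 0.
Proof. by case: HG => [H _ _ _]; case: (H g). Qed.
Lemma BgB g x y : Bg g x -> Bg g y -> Bg g (x - y).
Proof. by case: HG => [H _ _ _]; case: (H g) => _; apply. Qed.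
Lemma BgN g x : Bg g x -> Bg g (- x).
Proof. by move=> Hx; rewrite -sub0r; apply: BgB => //; apply: Bg0. Qed.
Lemma BgD g x y : Bg g x -> Bg g y -> Bg g (x + y).
Proof. by move=> Hx Hy; rewrite -[y]opprK; apply: BgB => //; apply: BgN. Qed.
Lemma BgM g h x y : Bg g x -> Bg h y -> Bg (g + h) (x * y).
Proof. by case: HG => [_ H _ _]; apply: H. Qed.
Lemma Bg_eq g h x : g = h -> Bg g x -> Bg h x.
Proof. by move->. Qed.
Lemma Bg_sum g (I : eqType) (r : seq I) (F : I -> B) :
  (forall i, i \in r -> Bg g (F i)) -> Bg g (\sum_(i <- r) F i).
Proof.
move=> H; rewrite big_seq; apply: (big_ind (Bg g)) => //; first exact: Bg0.
exact: BgD.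
Qed.
Lemma decomp b : exists (s : seq G) (f : G -> B),
  [/\ uniq s, forall g, Bg g (f g) & b = \sum_(g <- s) f g].
Proof. by case: HG => [_ _ H _]; apply: H. Qed.
Lemma direct {s : seq G} {f : G -> B} : uniq s -> (forall g, Bg g (f g)) ->
  \sum_(g <- s) f g = 0 -> forall g, g \in s -> f g = 0.
Proof. by case: HG => [_ _ _ H]; apply: H. Qed.

Lemma comp {s : seq G} {f : G -> B} {j x} : uniq s -> (forall g, Bg g (f g)) ->
  Bg j x -> \sum_(g <- s) f g = x ->
  (forall g, g \in s -> g != j -> f g = 0) /\ (j \notin s -> x = 0).
Proof.
move=> us Hf Hx Hs.
case: (boolP (j \in s)) => js.
  pose f' := fun g => if g == j then f g - x else f g.
  have Hf' : forall g, Bg g (f' g).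
    move=> g; rewrite /f'; case: eqP => [->|_] //; exact: BgB.
  have S0 : \sum_(g <- s) f' g = 0.
    rewrite (big_rem j js) /f' eqxx.
    have -> : \sum_(y <- rem j s) (if y == j then f y - x else f y)
            = \sum_(y <- rem j s) f y.
      apply: eq_big_seq => g; rewrite mem_rem_uniq // inE => /andP[/negPf -> _].
      by [].
    move: Hs; rewrite (big_rem j js) => <-.
    by rewrite opprD addrA subrr add0r; exact: addNr.
  split=> // g gs gj.
  by have := direct us Hf' S0 g gs; rewrite /f' (negPf gj).
pose f' := fun g => if g == j then - x else f g.
have Hf' : forall g, Bg g (f' g).
  move=> g; rewrite /f'; case: eqP => [->|_] //; exact: BgN.
have us' : uniq (j :: s) by rewrite /= js.
have S0 : \sum_(g <- j :: s) f' g = 0.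
  rewrite big_cons /f' eqxx.
  have -> : \sum_(y <- s) (if y == j then - x else f y) = \sum_(y <- s) f y.
    apply: eq_big_seq => g gs; case: eqP => // gj.
    by move: js; rewrite -gj gs.
  by rewrite Hs addNr.
split.
  move=> g gs gj.
  have := direct us' Hf' S0; move/(_ g); rewrite inE gs orbT /f' (negPf gj).
  by apply.
move=> _; have := direct us' Hf' S0; move/(_ j); rewrite inE eqxx /f' eqxx.
by move=> H; apply/eqP; rewrite -oppr_eq0 H.
Qed.

Lemma Bg1 : Bg 0 1.
Proof.
have [s [f [us Hf E]]] := decomp 1.
case: (boolP (has (fun g => f g != 0) s)) => [/hasP[j js fj]|].
  have E2 : \sum_(g' <- map (fun g => j + g) s) (f j * f (g' - j)) = f j.
    rewrite big_map -[RHS]mulr1 E mulr_sumr.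
    by apply: eq_bigr => g _; rewrite [j + g]addrC addrK.
  have uM : uniq (map (fun g => j + g) s) by rewrite map_inj_uniq //; apply: addrI.
  have HM : forall g', Bg g' (f j * f (g' - j)).
    move=> g'; apply: (@Bg_eq (j + (g' - j))); first by rewrite addrC addrNK.
    exact: BgM.
  have [C _] := comp uM HM (Hf j) E2.
  rewrite E; apply: Bg_sum => g gs.
  case: (eqVneq g 0) => [->|g0] //.
  have : f j * f (j + g - j) = 0.
    apply: C; first by apply/mapP; exists g.
    by apply: contra g0; rewrite -{2}[j]addr0 => /eqP/addrI ->.
  rewrite [j + g]addrC addrK => /eqP; rewrite mulf_eq0 (negPf fj) /= => /eqP ->.
  exact: Bg0.
rewrite -all_predC => /allP H.
have : (1 : B) = 0.
  rewrite E big_seq big1 // => g gs; have := H g gs; rewrite /= negbK => /eqP.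
  by [].
by move/eqP; rewrite oner_eq0.
Qed.

Lemma Bg_uniq g h x : Bg g x -> Bg h x -> x != 0 -> g = h.
Proof.
move=> Hg Hh x0; case: (eqVneq g h) => // gh.
pose f := fun k => if k == g then x else if k == h then - x else 0.
have Hf : forall k, Bg k (f k).
  move=> k; rewrite /f; case: eqP => [->|_] //; case: eqP => [->|_]; last exact: Bg0.
  exact: BgN.
have us : uniq [:: g; h] by rewrite /= inE gh.
have S0 : \sum_(k <- [:: g; h]) f k = 0.
  by rewrite !big_cons big_nil /f eqxx eq_sym (negPf gh) eqxx addr0 subrr.
have := direct us Hf S0 g; rewrite inE eqxx /f eqxx => /(_ isT) x00.
by move: x0; rewrite x00 eqxx.
Qed.



Lemma Bg_sumP g (I : Type) (r : seq I) (P : pred I) (F : I -> B) :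
  (forall i, P i -> Bg g (F i)) -> Bg g (\sum_(i <- r | P i) F i).
Proof. by move=> H; apply: (big_ind (Bg g)) => //; [exact: Bg0 | exact: BgD]. Qed.

Lemma group_deg (I : eqType) (r : seq I) (dg : I -> G) (X : I -> B) j :
  (forall i, Bg (dg i) (X i)) -> Bg j (\sum_(i <- r) X i) ->
  forall e, e != j -> \sum_(i <- r | dg i == e) X i = 0.
Proof.
move=> HX Hj.
set E := undup (map dg r).
pose fe := fun e => \sum_(i <- r | dg i == e) X i.
have Bfe : forall e, Bg e (fe e).
  by move=> e; apply: Bg_sumP => i /eqP <-.
have SE : \sum_(e <- E) fe e = \sum_(i <- r) X i.
  rewrite /fe; under eq_bigr do rewrite big_mkcond.
  rewrite exchange_big /=; apply: eq_big_seq => i ir.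
  rewrite (bigD1_seq (dg i)) ?undup_uniq ?mem_undup ?map_f //= eqxx big1 ?addr0 //.
  by move=> e; rewrite eq_sym => /negPf ->.
have [C _] := comp (undup_uniq _) Bfe Hj SE.
move=> e ej; case: (boolP (e \in E)) => eE; first exact: C.
rewrite big_seq_cond big1 // => i /andP[ir /eqP die].
by move: eE; rewrite -die mem_undup map_f.
Qed.

Lemma lead (S T : seq G) (f f' : G -> B) s0 t0 : uniq S -> uniq T ->
  (forall g, Bg g (f g)) -> (forall g, Bg g (f' g)) -> s0 \in S -> t0 \in T ->
  f s0 != 0 -> f' t0 != 0 -> (\sum_(g <- S) f g) * (\sum_(g <- T) f' g) = 1 ->
  (forall s t, s \in S -> t \in T -> s + t = s0 + t0 -> s = s0 /\ t = t0) ->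
  s0 + t0 = 0.
Proof.
move=> uS uT Hf Hf' s0S t0T fs0 ft0 xy Uq.
case: (eqVneq (s0 + t0) 0) => // e0; exfalso.
set I := [seq (a, b) | a <- S, b <- T].
have E : \sum_(p <- I) f p.1 * f' p.2 = 1.
  rewrite big_allpairs -xy mulr_suml; apply: eq_bigr => a _ /=; by rewrite mulr_sumr.
have HX : forall p : G * G, Bg (p.1 + p.2) (f p.1 * f' p.2) by move=> p; apply: BgM.
have HB : Bg 0 (\sum_(p <- I) f p.1 * f' p.2) by rewrite E; apply: Bg1.
have := group_deg _ _ _ _ _ HX HB _ e0.
have uI : uniq I by apply: allpairs_uniq => // -[? ?] [? ?] _ _ /= [-> ->].
have mI : (s0, t0) \in I by apply: allpairs_f.
rewrite big_mkcond (bigD1_seq (s0, t0)) //= eqxx.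
rewrite big_seq_cond big1 ?addr0.
  by move/eqP; rewrite mulf_eq0 (negPf fs0) (negPf ft0).
move=> p /andP[/allpairsP[[a b] [aS bT ->]] pn] /=.
case: eqP => // /(Uq a b aS bT) [ea eb].
by move: pn; rewrite ea eb eqxx.
Qed.

Lemma unit_hom : torsion_free G -> forall x y : B, x * y = 1 -> exists g, Bg g x.
Proof.
move=> TF x y xy.
have [S0 [f [uS0 Hf Ex]]] := decomp x.
have [T0 [f' [uT0 Hf' Ey]]] := decomp y.
set S := [seq g <- S0 | f g != 0].
set T := [seq g <- T0 | f' g != 0].
have ES : x = \sum_(g <- S) f g.
  rewrite Ex /S big_filter [RHS]big_mkcond; apply: eq_bigr => g _.
  by case: (eqVneq (f g) 0) => [->|].
have ET : y = \sum_(g <- T) f' g.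
  rewrite Ey /T big_filter [RHS]big_mkcond; apply: eq_bigr => g _.
  by case: (eqVneq (f' g) 0) => [->|].
have uS : uniq S by apply: filter_uniq.
have uT : uniq T by apply: filter_uniq.
have S0n : S != [::].
  apply/eqP => Se; move: xy; rewrite ES Se big_nil mul0r => /eqP; rewrite eq_sym oner_eq0.
  by [].
have T0n : T != [::].
  apply/eqP => Te; move: xy; rewrite ET Te big_nil mulr0 => /eqP; rewrite eq_sym oner_eq0.
  by [].
set FF := S ++ T.
have [w [W4 W2 Wi]] := weights_app _ TF FF.
pose phi := fun g => w (index g FF).
have inS : forall g, g \in S -> g \in FF by move=> g gS; rewrite mem_cat gS.
have inT : forall g, g \in T -> g \in FF by move=> g gT; rewrite mem_cat gT orbT.
have ix : forall g, g \in FF -> (index g FF < size FF)%N by move=> g; rewrite index_mem.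
have nx : forall g, g \in FF -> FF`_(index g FF) = g by move=> g gF; rewrite nth_index.
have pinj : forall g1 g2, g1 \in FF -> g2 \in FF -> phi g1 = phi g2 -> g1 = g2.
  move=> g1 g2 g1F g2F E; apply/eqP; apply: contraT => ne.
  have := Wi _ _ (ix _ g1F) (ix _ g2F); rewrite !nx // => /(_ ne).
  by rewrite -/(phi g1) -/(phi g2) E eqxx.
have prel4 : forall g1 g2 g3 g4, g1 \in FF -> g2 \in FF -> g3 \in FF -> g4 \in FF ->
    g1 + g2 = g3 + g4 -> phi g1 + phi g2 = phi g3 + phi g4.
  move=> g1 g2 g3 g4 h1 h2 h3 h4 E.
  by apply: W4; rewrite ?ix ?nx.
have prel2 : forall g1 g2, g1 \in FF -> g2 \in FF -> g1 + g2 = 0 -> phi g1 + phi g2 = 0.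
  move=> g1 g2 h1 h2 E.
  by apply: W2; rewrite ?ix ?nx.
have [sM sMS HsM] := argmax _ S phi S0n.
have [tM tMT HtM] := argmax _ T phi T0n.
have [sm smS Hsm] := argmax _ S (fun g => - phi g) S0n.
have [tm tmT Htm] := argmax _ T (fun g => - phi g) T0n.
have fnz : forall g, g \in S -> f g != 0 by move=> g; rewrite mem_filter => /andP[].
have fnz' : forall g, g \in T -> f' g != 0 by move=> g; rewrite mem_filter => /andP[].
have xy' : (\sum_(g <- S) f g) * (\sum_(g <- T) f' g) = 1 by rewrite -ES -ET.
have EM : sM + tM = 0.
  apply: (lead _ _ _ _ _ _ uS uT Hf Hf' sMS tMT (fnz _ sMS) (fnz' _ tMT) xy').
  move=> s t sS tT E.
  have := prel4 _ _ _ _ (inS _ sS) (inT _ tT) (inS _ sMS) (inT _ tMT) E.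
  have := HsM s sS; have := HtM t tT => h1 h2 h3.
  split; apply: pinj; try (by apply: inS); try (by apply: inT); lra.
have Em : sm + tm = 0.
  apply: (lead _ _ _ _ _ _ uS uT Hf Hf' smS tmT (fnz _ smS) (fnz' _ tmT) xy').
  move=> s t sS tT E.
  have := prel4 _ _ _ _ (inS _ sS) (inT _ tT) (inS _ smS) (inT _ tmT) E.
  have := Hsm s sS; have := Htm t tT => h1 h2 h3.
  split; apply: pinj; try (by apply: inS); try (by apply: inT); lra.
have pM := prel2 _ _ (inS _ sMS) (inT _ tMT) EM.
have pm := prel2 _ _ (inS _ smS) (inT _ tmT) Em.
have a1 := HsM sm smS; have a2 := HtM tm tmT.
exists sM; rewrite ES; apply: Bg_sum => g gS.
have -> // : g = sM.
apply: pinj; try (by apply: inS).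
have := HsM g gS; have := Hsm g gS; lra.
Qed.
Lemma field_deg0 (k : B -> Prop) : torsion_free G -> is_subfield k ->
  forall x, k x -> Bg 0 x.
Proof.
move=> TF [k1 kB kM kV] x kx.
case: (eqVneq x 0) => [->|x0]; first exact: Bg0.
have [y _ xy] := kV x kx (elimN eqP x0).
have [g Bx] := unit_hom TF _ _ xy.
case: (eqVneq (x + 1) 0) => [x1|x10].
  have -> : x = - 1 by apply/eqP; rewrite -addr_eq0 x1.
  by apply: BgN; apply: Bg1.
have k0 : k 0 by rewrite -(subrr 1); apply: (kB).
have kN1 : k (- 1) by rewrite -sub0r; apply: (kB).
have kx1 : k (x + 1) by rewrite -[1]opprK; apply: (kB).
have [z0 _ xz] := kV _ kx1 (elimN eqP x10).
have [j Bx1] := unit_hom TF _ _ xz.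
case: (eqVneq g 0) => [g0|g0]; first by rewrite -g0.
pose f := fun z => if z == g then x else if z == 0 then 1 else 0.
have Hf : forall z, Bg z (f z).
  move=> z; rewrite /f; case: eqP => [->|_] //; case: eqP => [->|_]; [exact: Bg1 | exact: Bg0].
have us : uniq [:: g; 0] by rewrite /= inE g0.
have S : \sum_(z <- [:: g; 0]) f z = x + 1.
  by rewrite !big_cons big_nil /f eqxx eq_sym (negPf g0) eqxx addr0.
have [C _] := comp us Hf Bx1 S.
case: (eqVneq 0 j) => [j0|j0].
  have := C g; rewrite inE eqxx -j0 => /(_ isT g0); rewrite /f eqxx => /eqP.
  by rewrite (negPf x0).
have := C 0; rewrite !inE eqxx orbT => /(_ isT j0); rewrite /f eq_sym (negPf g0) eqxx.
by move/eqP; rewrite oner_eq0.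
Qed.

Variables (D : B -> B) (h : G).
Hypothesis HD : is_derivation D.
Hypothesis Hh : forall g b, Bg g b -> Bg (g + h) (D b).
Hypothesis Hchar : [pchar B] =i pred0.

Lemma D_add x y : D (x + y) = D x + D y. Proof. by case: HD. Qed.
Lemma D_mul x y : D (x * y) = D x * y + x * D y. Proof. by case: HD. Qed.
Lemma D0 : D 0 = 0.
Proof.
have E := D_add 0 0; rewrite addr0 in E.
have : D 0 + D 0 - D 0 = D 0 - D 0 by rewrite -E.
by rewrite addrK subrr.
Qed.
Lemma DN x : D (- x) = - D x.
Proof.
have E := D_add x (- x); rewrite subrr D0 in E.
by apply/eqP; rewrite -addr_eq0 addrC -E.
Qed.
Lemma DB x y : D (x - y) = D x - D y.
Proof. by rewrite D_add DN. Qed.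
Lemma D1 : D 1 = 0.
Proof.
have E := D_mul 1 1; rewrite !mul1r !mulr1 in E.
have : D 1 + D 1 - D 1 = D 1 - D 1 by rewrite -E.
by rewrite addrK subrr.
Qed.
Lemma Dnat n : D n%:R = 0.
Proof. elim: n => [|n IH]; first exact: D0. by rewrite mulrS D_add D1 IH addr0. Qed.
Lemma DA_mul c x : D c = 0 -> D (c * x) = c * D x.
Proof. by move=> Dc; rewrite D_mul Dc mul0r add0r. Qed.
Lemma DAM x y : D x = 0 -> D y = 0 -> D (x * y) = 0.
Proof. by move=> Dx Dy; rewrite D_mul Dx Dy mul0r mulr0 addr0. Qed.
Lemma DAB x y : D x = 0 -> D y = 0 -> D (x - y) = 0.
Proof. by move=> Dx Dy; rewrite DB Dx Dy subrr. Qed.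
Lemma DAX x n : D x = 0 -> D (x ^+ n) = 0.
Proof. move=> Dx; elim: n => [|n IH]; first exact: D1. by rewrite exprS DAM. Qed.
Lemma D_sum (I : Type) (r : seq I) (P : pred I) (F : I -> B) :
  D (\sum_(i <- r | P i) F i) = \sum_(i <- r | P i) D (F i).
Proof. exact: (big_morph D D_add D0). Qed.

Lemma iter0 n : iter n D 0 = 0.
Proof. by elim: n => [|n IH] //=; rewrite IH D0. Qed.
Lemma iterB n x y : iter n D (x - y) = iter n D x - iter n D y.
Proof. by elim: n => [|n IH] //=; rewrite IH DB. Qed.
Lemma iterDadd n x y : iter n D (x + y) = iter n D x + iter n D y.
Proof. by elim: n => [|n IH] //=; rewrite IH D_add. Qed.
Lemma iterA n c x : D c = 0 -> iter n D (c * x) = c * iter n D x.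
Proof. by move=> Dc; elim: n => [|n IH] //=; rewrite IH DA_mul. Qed.
Lemma iter_sum n (I : Type) (r : seq I) (P : pred I) (F : I -> B) :
  iter n D (\sum_(i <- r | P i) F i) = \sum_(i <- r | P i) iter n D (F i).
Proof. by elim: n => [|n IH] //=; rewrite IH D_sum. Qed.
Lemma Bg_iter n g x : Bg g x -> Bg (g + h *+ n) (iter n D x).
Proof.
move=> Hx; elim: n => [|n IH] /=; first by rewrite mulr0n addr0.
by apply: (@Bg_eq (g + h *+ n + h)); [rewrite mulrSr addrA | exact: Hh].
Qed.

Lemma Dpow r n : D (r ^+ n.+1) = n.+1%:R * D r * r ^+ n.
Proof.
elim: n => [|n IH]; first by rewrite expr1 expr0 mulr1 mul1r.
rewrite exprSr D_mul IH [r ^+ n.+1]exprSr; ring.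
Qed.

Lemma iterpow r n : D (D r) = 0 -> iter n D (r ^+ n) = n`!%:R * (D r) ^+ n.
Proof.
move=> Dr2; elim: n => [|n IH]; first by rewrite /= expr0 mulr1.
rewrite iterSr Dpow -mulrA iterA; last by rewrite Dnat.
rewrite (@iterA n (D r)) // IH.
by rewrite factS natrM exprS; ring.
Qed.

Lemma iterpow_lt r k m : D (D r) = 0 -> (k < m)%N -> iter m D (r ^+ k) = 0.
Proof.
move=> Dr2 /subnKC <-; rewrite addnC iterD iterS iterpow //.
by rewrite DAM ?Dnat ?DAX // iter0.
Qed.

Lemma natf_neq0 n : (0 < n)%N -> n%:R != 0 :> B.
Proof. by move=> n0; have /pcharf0P -> := Hchar; rewrite -lt0n. Qed.

Lemma indep r n (c : nat -> B) : D (D r) = 0 -> D r != 0 ->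
  (forall k, D (c k) = 0) -> \sum_(k < n) c k * r ^+ k = 0 ->
  forall k, (k < n)%N -> c k = 0.
Proof.
move=> Dr2 Dr0 Hc; elim: n => [|n IH] S k; first by [].
rewrite big_ord_recr /= in S.
have cn : c n = 0.
  have := congr1 (iter n D) S; rewrite iter0 iterDadd iter_sum.
  rewrite big1; last by move=> i _; rewrite iterA // iterpow_lt // mulr0.
  rewrite iterA // iterpow // add0r => /eqP.
  rewrite !mulf_eq0 (negPf (natf_neq0 _ (fact_gt0 n) : n`!%:R != 0 :> B)) /= expf_eq0 (negPf Dr0) andbF orbF.
  by move/eqP.
rewrite cn mul0r addr0 in S.
rewrite ltnS leq_eqVlt => /orP[/eqP -> //|]; exact: IH.
Qed.

Lemma Bg_nat n : Bg 0 n%:R.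
Proof.
elim: n => [|n IH]; first exact: Bg0.
by rewrite mulrS; apply: BgD => //; apply: Bg1.
Qed.
Lemma Bg_exp g x n : Bg g x -> Bg (g *+ n) (x ^+ n).
Proof.
move=> Hx; elim: n => [|n IH]; first by rewrite expr0 mulr0n; apply: Bg1.
by rewrite exprS mulrS; apply: BgM.
Qed.

Lemma expand r d (Hr : Bg d r) (Dr2 : D (D r) = 0) (Dr0 : D r != 0) m :
  forall g x, Bg g x -> iter m D x = 0 ->
  exists c e (cs : nat -> B), [/\ D c = 0, Bg e c, c != 0,
    (forall k, D (cs k) = 0 /\ Bg (e + g - d *+ k) (cs k)) &
    c * x = \sum_(k < m) cs k * r ^+ k].
Proof.
elim: m => [|m IH] g x Hx Hm.
  exists 1, 0, (fun _ => 0); split.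
  - exact: D1.
  - exact: Bg1.
  - exact: oner_neq0.
  - by move=> k; split; [exact: D0 | exact: Bg0].
  - by rewrite big_ord0 mul1r; exact: Hm.
set y := iter m D x.
have Dy : D y = 0 by rewrite /y -iterS.
set am := m`!%:R * D r ^+ m.
have Dam : D am = 0 by rewrite DAM ?Dnat ?DAX.
have Bam : Bg ((d + h) *+ m) am.
  apply: (@Bg_eq (0 + (d + h) *+ m)); first by rewrite add0r.
  by apply: BgM; [apply: Bg_nat | apply: Bg_exp; apply: Hh].
have Hx' : Bg (g + (d + h) *+ m) (am * x - y * r ^+ m).
  apply: BgB.
    by apply: (@Bg_eq ((d + h) *+ m + g)); [rewrite addrC | apply: BgM].
  apply: (@Bg_eq (g + h *+ m + d *+ m)).
    by rewrite mulrnDl [d *+ m + _]addrC addrA.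
  by apply: BgM; [apply: Bg_iter | apply: Bg_exp].
have Hm' : iter m D (am * x - y * r ^+ m) = 0.
  rewrite iterB iterA // mulrC iterA // iterpow // /am -/y; ring.
have [c' [e' [cs' [Dc' Bc' c0 Hcs E]]]] := IH _ _ Hx' Hm'.
exists (c' * am), (e' + (d + h) *+ m), (fun k => if k == m then c' * y else cs' k).
split.
- exact: DAM.
- exact: BgM.
- rewrite mulf_neq0 // mulf_neq0 ?expf_neq0 //; exact: natf_neq0 (fact_gt0 m).
- move=> k; case: eqP => [->|km].
    split; first exact: DAM.
    apply: (@Bg_eq (e' + (g + h *+ m))); last by apply: BgM => //; apply: Bg_iter.
    rewrite mulrnDl [d *+ m + _]addrC [in RHS]addrA [e' + h *+ m + d *+ m + g]addrAC addrK.
    by rewrite [e' + h *+ m + g]addrAC -addrA.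
  have [Dk Bk] := Hcs k; split=> //.
  by apply: (@Bg_eq (e' + (g + (d + h) *+ m) - d *+ k)) => //; rewrite [g + _]addrC addrA.
- rewrite big_ord_recr /= eqxx.
  rewrite (eq_bigr (fun k : 'I_m => cs' k * r ^+ k)); last first.
    by move=> k _; rewrite ltn_eqF.
  rewrite -E; have -> : am * x = (am * x - y * r ^+ m) + y * r ^+ m by rewrite subrK.
  by rewrite -/y; ring.
Qed.

Hypothesis HLN : locally_nilpotent D.

Lemma chain {n} : forall y, D y != 0 -> iter n D y = 0 ->
  exists k, D (iter k D y) != 0 /\ D (D (iter k D y)) = 0.
Proof.
elim: n => [|n IH] y Dy Hn; first by move: Dy; have -> : y = 0 := Hn; rewrite D0 eqxx.
case: (eqVneq (D (D y)) 0) => [E|E]; first by exists 0.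
have [k [H1 H2]] := IH (D y) E (ltac:(by rewrite -iterSr)).
by exists k.+1; rewrite iterSr.
Qed.

Lemma slice : (exists b, D b <> 0) ->
  exists r d, [/\ Bg d r, D r != 0 & D (D r) = 0].
Proof.
move=> [b Db].
have [s [f [us Hf E]]] := decomp b.
case: (boolP (has (fun g => D (f g) != 0) s)) => [/hasP[j js fj]|]; last first.
  rewrite -all_predC => /allP H; exfalso; apply: Db.
  rewrite E D_sum big_seq big1 // => g gs; have := H g gs; rewrite /= negbK => /eqP.
  by [].
have [n Hn] := HLN (f j).
have [k [H1 H2]] := chain _ fj Hn.
exists (iter k D (f j)), (j + h *+ k); split=> //; exact: Bg_iter.
Qed.

Local Notation tof := (@FracField.tofrac B).

Lemma tof_neq0 x : x != 0 -> tof x != 0.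
Proof. by rewrite tofrac_eq0. Qed.

Lemma HFrac_sf (P : B -> Prop) : P 1 -> (forall x y, P x -> P y -> P (x - y)) ->
  (forall x y, P x -> P y -> P (x * y)) -> is_subfield (HFrac Bg P).
Proof.
move=> P1 PB PM; split.
- exists 0, 1, 1; split => //; try exact: Bg1; first by apply/eqP; exact: oner_neq0.
  by rewrite tofrac1 divr1.
- move=> _ _ [i [b [s [[Pb Ps] Bb Bs s0 ->]]]] [i' [b' [s' [[Pb' Ps'] Bb' Bs' s0' ->]]]].
  exists (i + i'), (b * s' - b' * s), (s * s'); split.
  + by split; [apply: PB; apply: PM | apply: PM].
  + apply: BgB; first exact: BgM.
    by apply: (@Bg_eq (i' + i)); [rewrite addrC | apply: BgM].
  + exact: BgM.
  + by apply/eqP; rewrite mulf_neq0 //; apply/eqP.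
  + have t0 : tof s != 0 by apply: tof_neq0; apply/eqP.
    have t0' : tof s' != 0 by apply: tof_neq0; apply/eqP.
    by rewrite tofracB !tofracM -mulNr addf_div // mulNr.
- move=> _ _ [i [b [s [[Pb Ps] Bb Bs s0 ->]]]] [i' [b' [s' [[Pb' Ps'] Bb' Bs' s0' ->]]]].
  exists (i + i'), (b * b'), (s * s'); split.
  + by split; apply: PM.
  + exact: BgM.
  + exact: BgM.
  + by apply/eqP; rewrite mulf_neq0 //; apply/eqP.
  + by rewrite !tofracM mulf_div.
- move=> _ [i [b [s [[Pb Ps] Bb Bs s0 ->]]]] x0.
  have b0 : b != 0 by apply/eqP => b0; apply: x0; rewrite b0 tofrac0 mul0r.
  have t0 : tof s != 0 by apply: tof_neq0; apply/eqP.
  exists (tof s / tof b); last first.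
    by rewrite mulf_div [tof s * tof b]mulrC divff // mulf_neq0 // tof_neq0.
  exists i, s, b; split => //; exact/eqP.
Qed.

Hypothesis HGA : forall g, degree_group Bg (fun b => D b = 0) g <->
                           degree_group Bg (fun _ => True) g.

Lemma GA_split g x : Bg g x -> x != 0 ->
  exists u1 u2 j2, [/\ D u1 = 0, D u2 = 0, Bg (g + j2) u1 & Bg j2 u2] /\ (u1 != 0 /\ u2 != 0).
Proof.
move=> Bx x0.
have : degree_group Bg (fun b => D b = 0) g.
  by apply/HGA => H _ _ HS; apply: HS; exists x; split=> //; apply/eqP.
move/(_ (fun g => exists u1 u2 j1 j2, [/\ D u1 = 0, D u2 = 0, Bg j1 u1 & Bg j2 u2]
      /\ [/\ u1 != 0, u2 != 0 & g = j1 - j2])).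
case.
- exists 1, 1, 0, 0; split; split; rewrite ?D1 ?oner_neq0 ?subrr //; exact: Bg1.
- move=> _ _ [u1 [u2 [j1 [j2 [[D1 D2 B1 B2] [n1 n2 ->]]]]]]
    [v1 [v2 [k1 [k2 [[E1 E2 C1 C2] [m1 m2 ->]]]]]].
  exists (u1 * v2), (u2 * v1), (j1 + k2), (j2 + k1); split; split.
  + exact: DAM.
  + exact: DAM.
  + exact: BgM.
  + exact: BgM.
  + exact: mulf_neq0.
  + exact: mulf_neq0.
  + by rewrite opprB opprD addrACA addrC.
- move=> k [b [Db Bb b0]]; exists b, 1, k, 0; split; split => //.
  + exact: D1.
  + exact: Bg1.
  + exact/eqP.
  + exact: oner_neq0.
  + by rewrite subr0.
- move=> u1 [u2 [j1 [j2 [[D1 D2 B1 B2] [n1 n2 E]]]]].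
  exists u1, u2, j2; split; split => //.
  by rewrite E subrK.
Qed.

Lemma parta : (exists b, D b <> 0) ->
  pure_trdeg1 (HFrac Bg (fun b => D b = 0)) (HFrac Bg (fun _ => True)).
Proof.
move=> Hex; have [r [d [Br Dr0 Dr2]]] := slice Hex.
have Ba : Bg (d + h) (D r) := Hh _ _ Br.
have r0 : r != 0 by apply: contra_neq Dr0 => ->; rewrite D0.
have [a1 [a2 [i2 [[Da1 Da2 Ba1 Ba2] [a10 a20]]]]] := GA_split _ _ Br r0.
set K := HFrac Bg (fun b => D b = 0).
set L := HFrac Bg (fun _ => True).
have SK : is_subfield K by apply: HFrac_sf; [exact: D1 | exact: DAB | exact: DAM].
have SL : is_subfield L by apply: HFrac_sf.
have KL : forall x, K x -> L x.
  by move=> x [i [b [s [_ Bb Bs s0 E]]]]; exists i, b, s.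
set t := tof (r * a2) / tof a1.
have Lt : L t.
  exists (d + i2), (r * a2), a1; split => //; first exact: BgM.
  exact/eqP.
split => //; exists t; split => //.
- move=> p Kp p0; apply/eqP => pt0.
  have CD : forall n, exists g (dl : nat -> B), [/\ D g = 0, g != 0,
       (forall k, D (dl k) = 0) & forall k, (k < n)%N -> tof g * p`_k = tof (dl k)].
    elim => [|n [g [dl [Dg g0 Ddl Hdl]]]].
      by exists 1, (fun _ => 0); split => //; [exact: D1 | exact: oner_neq0 | move=> k; exact: D0].
    have [i [be [sg [[Dbe Dsg] _ _ sg0 Ep]]]] := Kp n.
    have sg0' : sg != 0 by apply/eqP.
    exists (g * sg), (fun k => if (k < n)%N then dl k * sg else be * g); split.
    + exact: DAM.
    + exact: mulf_neq0.
    + by move=> k; case: ifP => _; apply: DAM.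
    + move=> k; rewrite ltnS leq_eqVlt => /orP[/eqP ->|kn].
        rewrite ltnn Ep !tofracM [tof be / _]mulrC mulrA mulfK; first by rewrite mulrC.
        exact: tof_neq0.
      by rewrite kn !tofracM -Hdl // mulrAC.
  set n := size p.
  have [g [dl [Dg g0 Ddl Hdl]]] := CD n.
  have E : \sum_(k < n) (dl k * a1 ^+ (n - k) * a2 ^+ k) * r ^+ k = 0.
    apply/eqP; rewrite -tofrac_eq0.
    have : tof g * tof a1 ^+ n * p.[t] = 0 by rewrite pt0 mulr0.
    rewrite horner_coef mulr_sumr.
    rewrite (eq_bigr (fun k : 'I_n => tof ((dl k * a1 ^+ (n - k) * a2 ^+ k) * r ^+ k))).
      by rewrite -rmorph_sum => ->.
    move=> k _.
    have -> : tof g * tof a1 ^+ n * (p`_k * t ^+ k) = (tof g * p`_k) * (tof a1 ^+ n * t ^+ k).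
      by ring.
    rewrite Hdl // /t fid4 ?tof_neq0 // 1?ltnW //.
    by rewrite -!tofracXn -!tofracM; congr tof; rewrite exprMn; ring.
  have Hc : forall k, D (dl k * a1 ^+ (n - k) * a2 ^+ k) = 0.
    by move=> k; rewrite !DAM // DAX.
  have Z := indep r n (fun k => dl k * a1 ^+ (n - k) * a2 ^+ k) Dr2 Dr0 Hc E.
  have pk : forall k, (k < n)%N -> p`_k = 0.
    move=> k kn; have := Z k kn; move/eqP; rewrite !mulf_eq0 !expf_eq0 (negPf a10) (negPf a20).
    rewrite !andbF !orbF => /eqP dk.
    have := Hdl k kn; rewrite dk tofrac0 => /eqP; rewrite mulf_eq0 tofrac_eq0 (negPf g0) /=.
    by move/eqP.
  have : lead_coef p = 0.
    by rewrite lead_coefE pk // prednK ?size_poly_gt0.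
  by move/eqP; rewrite lead_coef_eq0 (negPf p0).
- move=> x; split.
  + move=> [i [b [s [_ Bb Bs s0 ->]]]].
    have s0' : s != 0 by apply/eqP.
    have [u1 [u2 [j2 [[Du1 Du2 Bu1 Bu2] [u10 u20]]]]] := GA_split _ _ Bs s0'.
    have repr : forall y, Bg i y -> exists q : {poly {fraction B}},
        (forall k, K q`_k) /\ q.[t] = tof (y * u2) / tof u1.
      move=> y By; have [m Hm] := HLN y.
      have [c [e [cs [Dc Bc c0 Hcs Ec]]]] := @expand r d Br Dr2 Dr0 m i y By Hm.
      exists (\poly_(k < m) (tof (cs k * u2 * a1 ^+ k) / tof (c * u1 * a2 ^+ k))); split.
        move=> k; rewrite coef_poly; case: ifP => _; last exact: sf0.
        have [Dk Bk] := Hcs k.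
        exists (e + (i + j2) + i2 *+ k), (cs k * u2 * a1 ^+ k), (c * u1 * a2 ^+ k); split.
        * by split; rewrite !DAM // DAX.
        * apply: (Bg_eq _ _ _ (@zL2 _ e i d j2 i2 k)).
          by apply: BgM; [apply: BgM | apply: Bg_exp].
        * by apply: BgM; [apply: BgM | apply: Bg_exp].
        * by apply/eqP; rewrite !mulf_neq0 // expf_neq0.
        * by [].
      rewrite horner_poly.
      under eq_bigr => k _ do rewrite /t !tofracM !tofracXn fid1 ?tof_neq0 //.
      rewrite -mulr_suml -mulr_suml.
      under eq_bigr => k _ do rewrite -tofracXn -tofracM.
      rewrite -rmorph_sum -Ec rmorphM fid2 ?tof_neq0 //.
      by rewrite tofracM.
    have [P [KP EP]] := repr b Bb.
    have [Q [KQ EQ]] := repr s Bs.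
    exists P, Q; split => //.
      by rewrite EQ mulf_neq0 ?invr_neq0 ?tof_neq0 // mulf_neq0.
    by rewrite EP EQ !tofracM -fid3 // tof_neq0.
  + move=> [p [q [Kp Kq q0 ->]]].
    apply: sfM => //; first by apply: sf_poly => // k; apply: KL.
    by apply: sfV => //; apply: sf_poly => // k; apply: KL.
Qed.

Lemma hom_div j m x y : Bg j x -> Bg m (x * y) -> x != 0 -> Bg (m - j) y.
Proof.
move=> Bx Bxy x0.
have [s [f [us Hf E]]] := decomp y.
have E2 : \sum_(g' <- map (fun g => j + g) s) (x * f (g' - j)) = x * y.
  rewrite big_map E mulr_sumr.
  by apply: eq_bigr => g _; rewrite [j + g]addrC addrK.
have uM : uniq (map (fun g => j + g) s) by rewrite map_inj_uniq //; apply: addrI.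
have HM : forall g', Bg g' (x * f (g' - j)).
  move=> g'; apply: (@Bg_eq (j + (g' - j))); first by rewrite addrC addrNK.
  exact: BgM.
have [C _] := comp uM HM Bxy E2.
rewrite E; apply: Bg_sum => g gs.
case: (eqVneq (j + g) m) => [<-|gm]; first by rewrite [j + g]addrC addrK.
have : x * f (j + g - j) = 0 by apply: C => //; apply/mapP; exists g.
rewrite [j + g]addrC addrK => /eqP; rewrite mulf_eq0 (negPf x0) /= => /eqP ->.
exact: Bg0.
Qed.

Lemma indep_poly r (R : {poly B}) : D (D r) = 0 -> D r != 0 ->
  (forall i, D R`_i = 0) -> R.[r] = 0 -> R = 0.
Proof.
move=> Dr2 Dr0 HR E; case: (eqVneq R 0) => // R0; exfalso.
rewrite horner_coef in E.
have Z := indep r (size R) (fun i => R`_i) Dr2 Dr0 HR E.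
have : lead_coef R = 0 by rewrite lead_coefE Z // prednK ?size_poly_gt0.
by move/eqP; rewrite lead_coef_eq0 (negPf R0).
Qed.

Lemma unit_ker_r r d (Br : Bg d r) (Dr2 : D (D r) = 0) (Dr0 : D r != 0)
  gx gy x y : Bg gx x -> Bg gy y -> x * y = 1 -> D x = 0.
Proof.
move=> Bx By xy.
have [m1 H1] := HLN x; have [m2 H2] := HLN y.
have [c1 [e1 [cs1 [Dc1 Bc1 c10 Hcs1 E1]]]] := @expand r d Br Dr2 Dr0 m1 gx x Bx H1.
have [c2 [e2 [cs2 [Dc2 Bc2 c20 Hcs2 E2]]]] := @expand r d Br Dr2 Dr0 m2 gy y By H2.
set P := \poly_(k < m1) cs1 k.
set Q := \poly_(k < m2) cs2 k.
have DP : forall i, D P`_i = 0.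
  by move=> i; rewrite coef_poly; case: ifP => _; [case: (Hcs1 i) | exact: D0].
have DQ : forall i, D Q`_i = 0.
  by move=> i; rewrite coef_poly; case: ifP => _; [case: (Hcs2 i) | exact: D0].
have PQ : P * Q - (c1 * c2)%:P = 0.
  apply: (@indep_poly r) => //.
    move=> i; rewrite coefB coefC coefM DB D_sum big1 ?sub0r.
      by case: ifP => _; rewrite ?DAM ?oppr0 // D0 oppr0.
    by move=> j _; rewrite DAM.
  rewrite hornerD hornerN hornerM hornerC /P /Q !horner_poly -E1 -E2.
  by rewrite mulrACA xy mulr1 subrr.
have cc0 : c1 * c2 != 0 by rewrite mulf_neq0.
have P0 : P != 0.
  apply: contra_neq cc0 => P0; move/eqP: PQ; rewrite P0 mul0r sub0r oppr_eq0 polyC_eq0.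
  by move/eqP.
have Q0 : Q != 0.
  apply: contra_neq cc0 => Q0; move/eqP: PQ; rewrite Q0 mulr0 sub0r oppr_eq0 polyC_eq0.
  by move/eqP.
have sPQ : size (P * Q) = 1%N.
  by move/eqP: PQ; rewrite subr_eq0 => /eqP ->; rewrite size_polyC cc0.
have sP : (size P <= 1)%N.
  have := size_mul P0 Q0; rewrite sPQ.
  rewrite -!size_poly_gt0 in P0 Q0.
  move: P0 Q0; case: (size P) => [|[|k]] //; case: (size Q) => [|l] //; lia.
have EP := size1_polyC sP.
have : c1 * x = P`_0 by rewrite -[LHS]/(c1 * x) E1 -horner_poly -/P {1}EP hornerC.
move/(congr1 D); rewrite DP DA_mul // => /eqP; rewrite mulf_eq0 (negPf c10) /=.
by move/eqP.
Qed.

Lemma partb : (exists b, D b <> 0) -> forall k : B -> Prop, is_subfield k ->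
  is_subfield (fun x => k x /\ Bg 0 x) /\
  (forall x, k x -> Bg 0 x -> HFrac Bg (fun b => D b = 0) (tof x)).
Proof.
move=> Hex k Sk; have [r [d [Br Dr0 Dr2]]] := slice Hex.
case: Sk => k1 kB kM kV.
split.
  split.
  - by split => //; exact: Bg1.
  - by move=> x y [kx Bx] [ky By]; split; [apply: kB | apply: BgB].
  - move=> x y [kx Bx] [ky By]; split; first exact: kM.
    by apply: (@Bg_eq (0 + 0)); [rewrite addr0 | apply: BgM].
  - move=> x [kx Bx] x0; have [y ky xy] := kV x kx x0.
    exists y => //; split => //.
    have xy' : Bg 0 (x * y) by rewrite xy; exact: Bg1.
    by have := hom_div _ _ _ _ Bx xy' (introN eqP x0); rewrite subrr.
move=> x kx Bx.
have Dx : D x = 0.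
  case: (eqVneq x 0) => [->|x0]; first exact: D0.
  have [y ky xy] := kV x kx (elimN eqP x0).
  have xy' : Bg 0 (x * y) by rewrite xy; exact: Bg1.
  have By := hom_div _ _ _ _ Bx xy' x0; rewrite subrr in By.
  exact: (@unit_ker_r r d Br Dr2 Dr0 0 0 x y).
exists 0, x, 1; split => //; try exact: Bg1.
- by split => //; exact: D1.
- exact/eqP/oner_neq0.
- by rewrite tofrac1 divr1.
Qed.
End Grad.

Theorem theorem3p6 (G : zmodType) (B : idomainType) (Bg : G -> B -> Prop)
    (D : B -> B) :
  is_grading Bg ->
  [pchar B] =i pred0 ->
  is_HLND Bg D ->
  (exists b, D b <> 0) ->
  (forall g, degree_group Bg (fun b => D b = 0) g <-> degree_group Bg (fun _ => True) g) ->
  let A := fun b : B => D b = 0 in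
  [/\ (* (a) *)
      pure_trdeg1 (HFrac Bg A) (HFrac Bg (fun _ => True)),
      (* (b) *)
      (forall k : B -> Prop, is_subfield k ->
         is_subfield (fun x => k x /\ Bg 0 x) /\
         (forall x, k x -> Bg 0 x -> HFrac Bg A (FracField.tofrac x))) &
      (* (c) *)
      (torsion_free G -> forall k : B -> Prop, is_subfield k ->
         (forall x, k x -> HFrac Bg A (FracField.tofrac x)) /\
         ruled (fun y => exists2 x, k x & y = FracField.tofrac x)
               (HFrac Bg (fun _ => True)))].
Proof.
move=> HG Hchar [HD HLN [h Hh]] Hex HGA A.
have Pa := parta _ _ _ HG _ _ HD Hh Hchar HLN HGA Hex.
have Pb := partb _ _ _ HG _ _ HD Hh Hchar HLN Hex.
split => //.
move=> TF k Sk.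
have Hk : forall x, k x -> HFrac Bg A (FracField.tofrac x).
  move=> x kx; have [_ H] := Pb k Sk; apply: H => //.
  exact: (field_deg0 _ _ _ HG _ TF Sk x kx).
split => //.
exists (HFrac Bg A); split => //.
- by move=> _ [x kx ->]; apply: Hk.
- by move=> x [i [b [s [_ Bb Bs s0 E]]]]; exists i, b, s.
Qed.
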